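(* Let $P,Q,R\in D$ be non-collinear and let $m\in\mathbb{Z}_{\ge0}$ be the number of triangles inscribed in $S^1$ and circumscribing $\triangle PQR$. Then $$m=\begin{cases}0 & \text{if } \delta(P,Q,R)<\Delta'(P,Q),\\ 1 & \text{if } \delta(P,Q,R)=\Delta'(P,Q),\\ 2 & \text{if } \delta(P,Q,R)>\Delta'(P,Q).\end{cases}$$
   Context: $D=\{(x,y)\in\mathbb{R}^2: x^2+y^2<1\}$ (Beltrami–Klein disk), $S^1$ its boundary circle. Let $D_P$ be the unit disk with Poincaré distance $d(P,Q)=\operatorname{arccosh}\left(1+\frac{2|P-Q|^2}{(1-|P|^2)(1-|Q|^2)}\right)$, and $G:D_P\to D$, $G(x,y)=\left(\frac{2x}{1+x^2+y^2},\frac{2y}{1+x^2+y^2}\right)$, with inverse $G^{-1}(x,y)=\left(\frac{x}{1+\sqrt{1-x^2-y^2}},\frac{y}{1+\sqrt{1-x^2-y^2}}\right)$. For $P,Q\in D$, $d'(P,Q):=d(G^{-1}(P),G^{-1}(Q))$; equivalently, if $v_1,v_2\in S^1$ are the endpoints of the chord through $P,Q$, $d'(P,Q)=\frac12\left|\log\frac{|v_1Q||v_2P|}{|v_1P||v_2Q|}\right|$. For $P\ne Q$, $\Delta'(P,Q):=\log\frac{e^{d'(P,Q)}+1}{e^{d'(P,Q)}-1}$. $\delta(P,Q,R)$ is the minimum of $d'(R,S)$ over points $S\in D$ on the straight line through $P$ and $Q$. A triangle inscribed in $S^1$ and circumscribing $\triangle PQR$ is a Euclidean triangle with three distinct vertices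 on $S^1$ such that $P$, $Q$, $R$ lie on three distinct sides of it (one point on each side). *)

(* Defs.v *)
From HB Require Import structures.
From mathcomp Require Import all_boot all_order all_algebra.
From mathcomp Require Import all_classical all_reals all_analysis.
Set Implicit Arguments. Unset Strict Implicit. Unset Printing Implicit Defensive.
Import Order.TTheory GRing.Theory Num.Theory.
Local Open Scope ring_scope.
Local Open Scope classical_set_scope.

Section Defs.
Variable R : realType.
Definition plane_pt := (R * R)%type.

Definition sqnorm (P : plane_pt) : R := P.1 ^+ 2 + P.2 ^+ 2.
Definition sqdist (P Q : plane_pt) : R := (P.1 - Q.1) ^+ 2 + (P.2 - Q.2) ^+ 2.

Definition inD (P : plane_pt) : Prop := sqnorm P < 1.
Definition onS1 (P : plane_pt) : Prop := sqnorm P = 1.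

Definition arccosh (x : R) : R := ln (x + Num.sqrt (x ^+ 2 - 1)).

Definition dP (P Q : plane_pt) : R :=
  arccosh (1 + 2 * sqdist P Q / ((1 - sqnorm P) * (1 - sqnorm Q))).

(* G^{-1} : Klein disk -> Poincare disk *)
Definition Ginv (P : plane_pt) : plane_pt :=
  (P.1 / (1 + Num.sqrt (1 - sqnorm P)), P.2 / (1 + Num.sqrt (1 - sqnorm P))).

Definition dK (P Q : plane_pt) : R := dP (Ginv P) (Ginv Q).

Definition DeltaK (P Q : plane_pt) : R :=
  ln ((expR (dK P Q) + 1) / (expR (dK P Q) - 1)).

Definition on_line (P Q S : plane_pt) : Prop :=
  exists t : R, S = (P.1 + t * (Q.1 - P.1), P.2 + t * (Q.2 - P.2)).

(* delta(P,Q,R0) : min of d'(R0,S) over S in D on the line PQ (taken as inf) *)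
Definition deltaK (P Q R0 : plane_pt) : R :=
  inf [set dK R0 S | S in [set S | inD S /\ on_line P Q S]].

Definition collinear (P Q S : plane_pt) : Prop :=
  exists a b c : R, (a != 0 \/ b != 0) /\
    a * P.1 + b * P.2 = c /\ a * Q.1 + b * Q.2 = c /\ a * S.1 + b * S.2 = c.

Definition on_segment (A B X : plane_pt) : Prop :=
  exists t : R, 0 <= t <= 1 /\
    X = ((1 - t) * A.1 + t * B.1, (1 - t) * A.2 + t * B.2).

(* The set of triangles (identified with their vertex sets) inscribed in S^1
   and circumscribing triangle PQR0: P, Q, R0 on three distinct sides. *)
Definition circ_inscribed_triangles (P Q R0 : plane_pt) : set (set plane_pt) :=
  [set T | exists A B C : plane_pt,
     [/\ onS1 A, onS1 B & onS1 C] /\ [/\ A <> B, B <> C & C <> A] /\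
     T = [set A; B; C] /\
     [/\ on_segment A B P, on_segment B C Q & on_segment C A R0]].
End Defs.

(* Main.v *)
Require Import Defs.
From HB Require Import structures.
From mathcomp Require Import all_boot all_order all_algebra.
From mathcomp Require Import all_classical all_reals all_analysis.
From mathcomp Require Import ring lra.
Import Order.TTheory GRing.Theory Num.Theory.
Local Open Scope ring_scope.
Local Open Scope classical_set_scope.
Set Implicit Arguments. Unset Strict Implicit. Unset Printing Implicit Defensive.
Local Open Scope card_scope.
Section S1.
Variable R : realType.
Implicit Types (P Q A B C : plane_pt R).

Definition dot (A B : plane_pt R) : R := A.1 * B.1 + A.2 * B.2.

Definition sig (P A : plane_pt R) : plane_pt R :=
  let k := 2 * (1 - dot A P) / sqdist P A in
  (A.1 + k * (P.1 - A.1), A.2 + k * (P.2 - A.2)).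

Lemma eq_via (a b f c k : R) : a - b = k * (f - c) -> f = c -> a = b.
Proof. by move=> h hf; apply/eqP; rewrite -subr_eq0 h hf subrr mulr0. Qed.

Lemma sqsum0 (u v : R) : u ^+ 2 + v ^+ 2 = 0 -> u = 0 /\ v = 0.
Proof.
move=> h; have hu : u ^+ 2 = 0 by nra.
have hv : v ^+ 2 = 0 by nra.
by split; apply/eqP; rewrite -sqrf_eq0; apply/eqP.
Qed.

Lemma dist_pos P A : inD P -> onS1 A -> 0 < sqdist P A.
Proof.
case: P => x y; case: A => a b; rewrite /inD /onS1 /sqnorm /sqdist /= => hP hA.
rewrite lt_neqAle; apply/andP; split; last by rewrite addr_ge0 // sqr_ge0.
apply/eqP => /esym /sqsum0 [h1 h2].
have ex : x = a by lra.
have ey : y = b by lra.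
subst; lra.
Qed.

Lemma dot_lt1 P A : inD P -> onS1 A -> 0 < 1 - dot A P.
Proof.
move=> hP hA; have := dist_pos hP hA; move: hP hA.
case: P => x y; case: A => a b; rewrite /inD /onS1 /sqnorm /sqdist /dot /= => hP hA hd.
lra.
Qed.

Definition on_seg := @on_segment R.

Lemma sig_onS1 P A : inD P -> onS1 A -> onS1 (sig P A).
Proof.
move=> hP hA; have hd := dist_pos hP hA; move: hP hA hd.
case: P => x y; case: A => a b; rewrite /inD /onS1 /sqnorm /sqdist /dot /sig /= => hP hA hd.
set d := (x - a) ^+ 2 + (y - b) ^+ 2 in hd *.
set k := 2 * (1 - (a * x + b * y)) / d.
have hk : k * d = 2 * (1 - (a * x + b * y)) by rewrite /k; field; lra.
have hk2 : k * (k * d) = k * (2 * (1 - (a * x + b * y))) by rewrite hk.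
have hAk : k * (a ^+ 2 + b ^+ 2) = k by rewrite hA mulr1.
rewrite /d in hk hk2; lra.
Qed.

Lemma sig_seg P A : inD P -> onS1 A -> on_segment A (sig P A) P.
Proof.
move=> hP hA; have hd := dist_pos hP hA; have h1 := dot_lt1 hP hA; move: hP hA hd h1.
case: P => x y; case: A => a b; rewrite /inD /onS1 /sqnorm /sqdist /dot /sig /= => hP hA hd h1.
set d := (x - a) ^+ 2 + (y - b) ^+ 2 in hd *.
exists (d / (2 * (1 - (a * x + b * y)))); split.
  apply/andP; split; first by apply: divr_ge0; lra.
  rewrite ler_pdivrMr; last lra.
  rewrite /d; lra.
congr pair; rewrite /dot /sqdist /= -/d; field; lra.
Qed.

Lemma seg_sig P A B : inD P -> onS1 A -> onS1 B -> on_segment A B P -> B = sig P A.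
Proof.
case: P => x y; case: A => a1 a2; case: B => b1 b2.
rewrite /inD /onS1 /sqnorm /sqdist /dot /sig /= => hP hA hB [t [/andP [t0 t1] [ex ey]]].
subst x y.
have tn0 : t != 0.
  apply/eqP => t0'; subst t; move: hP; rewrite !subr0 !mul1r !mul0r !addr0; lra.
set e := (b1 - a1) ^+ 2 + (b2 - a2) ^+ 2.
have en0 : e != 0.
  apply/eqP => /sqsum0 [h1 h2].
  have e1 : b1 = a1 by lra.
  have e2 : b2 = a2 by lra.
  subst; move: hP.
  have -> : (1 - t) * a1 + t * a1 = a1 by ring.
  have -> : (1 - t) * a2 + t * a2 = a2 by ring.
  lra.
have hAt : t * (a1 ^+ 2 + a2 ^+ 2) = t by rewrite hA mulr1.
have hBt : t * (b1 ^+ 2 + b2 ^+ 2) = t by rewrite hB mulr1.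
have E1 : 1 - (a1 * ((1 - t) * a1 + t * b1) + a2 * ((1 - t) * a2 + t * b2)) = t * e / 2.
  rewrite /e; lra.
have E2 : ((1 - t) * a1 + t * b1 - a1) ^+ 2 + ((1 - t) * a2 + t * b2 - a2) ^+ 2 = t ^+ 2 * e.
  rewrite /e; ring.
rewrite /dot /sqdist /= E1 E2; congr pair; field; apply/andP; split => //.
Qed.

End S1.
Section S2.
Variable R : realType.
Implicit Types (P Q A B C : plane_pt R) (s : R * R).

Lemma seg_flip A B P : on_segment A B P -> on_segment B A P.
Proof.
case=> t [/andP [t0 t1] ->]; exists (1 - t); split.
  apply/andP; split; lra.
congr pair; ring.
Qed.

Lemma sig_invol P A : inD P -> onS1 A -> sig P (sig P A) = A.
Proof.
move=> hP hA; apply/esym/seg_sig => //; first exact: sig_onS1.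
exact/seg_flip/sig_seg.
Qed.

Lemma sig_neq P A : inD P -> onS1 A -> sig P A <> A.
Proof.
move=> hP hA e; have := sig_seg hP hA; rewrite e.
case=> t [_ eP]; move: hP hA; rewrite eP; case: A {e eP} => a b.
rewrite /inD /onS1 /sqnorm /=.
have -> : (1 - t) * a + t * a = a by ring.
have -> : (1 - t) * b + t * b = b by ring.
lra.
Qed.

Lemma seg_iff P A B : inD P -> onS1 A ->
  (onS1 B /\ on_segment A B P) <-> B = sig P A.
Proof.
move=> hP hA; split; first by case=> hB hs; exact: seg_sig.
by move=> ->; split; [exact: sig_onS1 | exact: sig_seg].
Qed.

Definition nn s : R := s.1 ^+ 2 + s.2 ^+ 2.
Definition Apt s : plane_pt R := ((s.1 ^+ 2 - s.2 ^+ 2) / nn s, 2 * s.1 * s.2 / nn s).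
Definition Hm P s : R * R := (P.2 * s.1 - (1 + P.1) * s.2, (1 - P.1) * s.1 - P.2 * s.2).

Lemma Apt_onS1 s : 0 < nn s -> onS1 (Apt s).
Proof.
case: s => u v; rewrite /onS1 /sqnorm /Apt /nn /= => h.
field; lra.
Qed.

Lemma Hm_nz P s : inD P -> 0 < nn s -> 0 < nn (Hm P s).
Proof.
case: P => x y; case: s => u v; rewrite /inD /sqnorm /nn /Hm /= => hP hs.
rewrite lt_neqAle addr_ge0 ?sqr_ge0 // andbT; apply/eqP => /esym /sqsum0 [e1 e2].
have h1 : (1 - x ^+ 2 - y ^+ 2) * u = 0.
  have -> : (1 - x ^+ 2 - y ^+ 2) * u = -(y * (y * u - (1 + x) * v) - (1 + x) * ((1 - x) * u - y * v)) by ring.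
  by rewrite e1 e2; ring.
have h2 : (1 - x ^+ 2 - y ^+ 2) * v = 0.
  have -> : (1 - x ^+ 2 - y ^+ 2) * v = -((1 - x) * (y * u - (1 + x) * v) - y * ((1 - x) * u - y * v)) by ring.
  by rewrite e1 e2; ring.
move/eqP: h1; rewrite mulf_eq0 => /orP [|/eqP hu]; first by move/eqP; lra.
move/eqP: h2; rewrite mulf_eq0 => /orP [|/eqP hv]; first by move/eqP; lra.
subst; lra.
Qed.

Lemma sig_Apt P s : inD P -> 0 < nn s -> sig P (Apt s) = Apt (Hm P s).
Proof.
move=> hP hs; have hH := Hm_nz hP hs; move: hP hs hH.
case: P => x y; case: s => u v; rewrite /inD /sqnorm /Hm /Apt /sig /dot /sqdist /nn /= => hP hs hH.
have E1 : 1 - ((u ^+ 2 - v ^+ 2) / (u ^+ 2 + v ^+ 2) * x + 2 * u * v / (u ^+ 2 + v ^+ 2) * y)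
   = ((1 - x) * u ^+ 2 + (1 + x) * v ^+ 2 - 2 * y * u * v) / (u ^+ 2 + v ^+ 2).
  field; lra.
have E2 : (x - (u ^+ 2 - v ^+ 2) / (u ^+ 2 + v ^+ 2)) ^+ 2 + (y - 2 * u * v / (u ^+ 2 + v ^+ 2)) ^+ 2
   = ((y * u - (1 + x) * v) ^+ 2 + ((1 - x) * u - y * v) ^+ 2) / (u ^+ 2 + v ^+ 2).
  field; lra.
rewrite E1 E2.
congr pair; field; lra.
Qed.

Lemma Apt_surj A : onS1 A -> exists s, 0 < nn s /\ A = Apt s.
Proof.
case: A => a b; rewrite /onS1 /sqnorm /Apt /nn /= => hA.
have [ea|na] := eqVneq a (-1).
  subst a; have hb : b ^+ 2 = 0 by lra.
  have -> : b = 0 by apply/eqP; rewrite -sqrf_eq0 hb.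
  exists (0, 1); rewrite /=; split; first lra.
  by congr pair; field; lra.
have ha : -1 < a.
  have : -1 <= a by nra.
  by rewrite le_eqVlt => /orP [/eqP e|//]; move: na; rewrite e eqxx.
exists (1 + a, b); rewrite /=.
have hn : (1 + a) ^+ 2 + b ^+ 2 = 2 * (1 + a) by lra.
split; first lra.
rewrite hn; have eb : b ^+ 2 = 1 - a ^+ 2 by lra.
rewrite eb; congr pair; field; lra.
Qed.

Lemma Apt_eq s1 s2 : 0 < nn s1 -> 0 < nn s2 ->
  (Apt s1 = Apt s2 <-> s1.1 * s2.2 = s2.1 * s1.2).
Proof.
case: s1 => u1 v1; case: s2 => u2 v2; rewrite /Apt /nn /= => h1 h2.
set n1 := u1 ^+ 2 + v1 ^+ 2 in h1 *; set n2 := u2 ^+ 2 + v2 ^+ 2 in h2 *.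
have hn1 : n1 = u1 ^+ 2 + v1 ^+ 2 by [].
have hn2 : n2 = u2 ^+ 2 + v2 ^+ 2 by [].
split.
  case=> e1 e2.
  have eX : u1 ^+ 2 / n1 = u2 ^+ 2 / n2.
    have -> : u1 ^+ 2 / n1 = (1 + (u1 ^+ 2 - v1 ^+ 2) / n1) / 2 by rewrite /n1; field; lra.
    have -> : u2 ^+ 2 / n2 = (1 + (u2 ^+ 2 - v2 ^+ 2) / n2) / 2 by rewrite /n2; field; lra.
    by rewrite e1.
  have eY : v1 ^+ 2 / n1 = v2 ^+ 2 / n2.
    have -> : v1 ^+ 2 / n1 = (1 - (u1 ^+ 2 - v1 ^+ 2) / n1) / 2 by rewrite /n1; field; lra.
    have -> : v2 ^+ 2 / n2 = (1 - (u2 ^+ 2 - v2 ^+ 2) / n2) / 2 by rewrite /n2; field; lra.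
    by rewrite e1.
  have eZ : u1 * v1 / n1 = u2 * v2 / n2.
    have -> : u1 * v1 / n1 = 2 * u1 * v1 / n1 / 2 by field; lra.
    have -> : u2 * v2 / n2 = 2 * u2 * v2 / n2 / 2 by field; lra.
    by rewrite e2.
  have key : (u1 * v2 - u2 * v1) ^+ 2 / (n1 * n2) =
     (u1 ^+ 2 / n1) * (v2 ^+ 2 / n2) - 2 * (u1 * v1 / n1) * (u2 * v2 / n2)
     + (u2 ^+ 2 / n2) * (v1 ^+ 2 / n1) by field; lra.
  rewrite -eX -eY -eZ in key.
  have : (u1 * v2 - u2 * v1) ^+ 2 / (n1 * n2) = 0.
    by rewrite key /n1; field; lra.
  move=> z.
  have nz : n1 * n2 != 0 by apply: mulf_neq0; lra.
  have : (u1 * v2 - u2 * v1) ^+ 2 = 0 by rewrite -(divfK nz ((u1 * v2 - u2 * v1) ^+ 2)) z mul0r.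
  move/eqP; rewrite sqrf_eq0 subr_eq0 => /eqP; lra.
move=> e.
have k1 : (u1 ^+ 2 - v1 ^+ 2) * n2 - (u2 ^+ 2 - v2 ^+ 2) * n1 = 0.
  have -> : (u1 ^+ 2 - v1 ^+ 2) * n2 - (u2 ^+ 2 - v2 ^+ 2) * n1
     = 2 * (u1 * v2 - u2 * v1) * (u1 * v2 + u2 * v1) by rewrite /n1 /n2; ring.
  by rewrite (_ : u1 * v2 - u2 * v1 = 0) ?mulr0 ?mul0r //; lra.
have k2 : 2 * u1 * v1 * n2 - 2 * u2 * v2 * n1 = 0.
  have -> : 2 * u1 * v1 * n2 - 2 * u2 * v2 * n1
     = 2 * (u1 * v2 - u2 * v1) * (v1 * v2 - u1 * u2) by rewrite /n1 /n2; ring.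
  by rewrite (_ : u1 * v2 - u2 * v1 = 0) ?mulr0 ?mul0r //; lra.
congr pair; apply/eqP; rewrite -subr_eq0; apply/eqP.
  have -> : (u1 ^+ 2 - v1 ^+ 2) / n1 - (u2 ^+ 2 - v2 ^+ 2) / n2
     = ((u1 ^+ 2 - v1 ^+ 2) * n2 - (u2 ^+ 2 - v2 ^+ 2) * n1) / (n1 * n2) by field; lra.
  by rewrite k1 mul0r.
have -> : 2 * u1 * v1 / n1 - 2 * u2 * v2 / n2
   = (2 * u1 * v1 * n2 - 2 * u2 * v2 * n1) / (n1 * n2) by field; lra.
by rewrite k2 mul0r.
Qed.

End S2.
Section S3.
Variable R : realType.
Variables (P Q R0 : plane_pt R).

Definition HHH (s : R * R) := Hm R0 (Hm Q (Hm P s)).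
Definition n11 := (HHH (1, 0)).1.
Definition n21 := (HHH (1, 0)).2.
Definition n12 := (HHH (0, 1)).1.
Definition n22 := (HHH (0, 1)).2.
Definition alpha := - (n12 + n21).
Definition beta := n11 - n22.
Definition gamma := n12 - n21.
Definition ell (A : plane_pt R) := alpha * A.1 + beta * A.2 + gamma.
Definition Fm (A : plane_pt R) := sig R0 (sig Q (sig P A)).
Definition det2 := (Q.1 - P.1) * (R0.2 - P.2) - (Q.2 - P.2) * (R0.1 - P.1).
Definition prod3 := (1 - sqnorm P) * (1 - sqnorm Q) * (1 - sqnorm R0).

Lemma HHH_lin s : HHH s = (n11 * s.1 + n12 * s.2, n21 * s.1 + n22 * s.2).
Proof.
case: s => u v; case: P => x1 y1; case: Q => x2 y2; case: R0 => x3 y3.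
rewrite /n11 /n12 /n21 /n22 /HHH /Hm /=; congr pair; ring.
Qed.

Lemma disc_eq : alpha ^+ 2 + beta ^+ 2 - gamma ^+ 2 = 4 * (det2 ^+ 2 - prod3).
Proof.
rewrite /alpha /beta /gamma /det2 /prod3 /n11 /n12 /n21 /n22 /HHH /Hm /sqnorm.
case: P => x1 y1; case: Q => x2 y2; case: R0 => x3 y3 /=; ring.
Qed.

Lemma trace_id : R0.2 * n11 - (1 + R0.1) * n21 + (1 - R0.1) * n12 - R0.2 * n22
   = 2 * (1 - sqnorm R0) * (1 - dot P Q).
Proof.
rewrite /n11 /n12 /n21 /n22 /HHH /Hm /sqnorm /dot.
case: P => x1 y1; case: Q => x2 y2; case: R0 => x3 y3 /=; ring.
Qed.

Hypotheses (hP : inD P) (hQ : inD Q) (hR : inD R0).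

Lemma dotPQ : 0 < 1 - dot P Q.
Proof.
move: hP hQ; rewrite /inD /sqnorm /dot.
case: P => x1 y1; case: Q => x2 y2 /= h1 h2.
have : 0 <= (x1 - x2) ^+ 2 + (y1 - y2) ^+ 2 by rewrite addr_ge0 // sqr_ge0.
lra.
Qed.

Lemma not_all0 : ~ (alpha = 0 /\ beta = 0 /\ gamma = 0).
Proof.
rewrite /alpha /beta /gamma => -[a0 [b0 c0]].
have e12 : n12 = 0 by lra.
have e21 : n21 = 0 by lra.
have e22 : n22 = n11 by lra.
have := trace_id; rewrite e12 e21 e22.
have -> : R0.2 * n11 - (1 + R0.1) * 0 + (1 - R0.1) * 0 - R0.2 * n11 = 0 by ring.
have hd := dotPQ; have hR' := hR; rewrite /inD in hR'.
by move=> /esym /eqP; rewrite !mulf_eq0 => /orP [/orP [/eqP|/eqP]|/eqP]; lra.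
Qed.

Lemma fix_iff A : onS1 A -> (Fm A = A <-> ell A = 0).
Proof.
move=> hA; have [s [hs ->]] := Apt_surj hA.
have h1 := Hm_nz hP hs.
have h2 := Hm_nz hQ h1.
have h3 := Hm_nz hR h2.
rewrite /Fm (sig_Apt hP hs) (sig_Apt hQ h1) (sig_Apt hR h2).
rewrite (Apt_eq h3 hs).
have -> : Hm R0 (Hm Q (Hm P s)) = HHH s by [].
rewrite HHH_lin.
clear h1 h2 h3; move: hs; case: s => u v; rewrite /ell /Apt /nn /alpha /beta /gamma /= => hs.
have -> : - (n12 + n21) * ((u ^+ 2 - v ^+ 2) / (u ^+ 2 + v ^+ 2)) +
    (n11 - n22) * (2 * u * v / (u ^+ 2 + v ^+ 2)) + (n12 - n21)
  = 2 * ((n11 * u + n12 * v) * v - u * (n21 * u + n22 * v)) / (u ^+ 2 + v ^+ 2).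
  field; lra.
split.
  by move=> ->; rewrite subrr mulr0 mul0r.
move/eqP; rewrite mulf_eq0 invr_eq0 mulf_eq0 => /orP [/orP [|]|].
- by move/eqP; lra.
- by rewrite subr_eq0 => /eqP.
- by move/eqP; lra.
Qed.

End S3.
Section S4.
Variable R : realType.
Variables (al be ga : R).

Definition aa := al ^+ 2 + be ^+ 2.
Definition Dd := aa - ga ^+ 2.
Definition ptm (m : R) : plane_pt R := ((- al * ga - be * m) / aa, (- be * ga + al * m) / aa).
Definition Lset := [set X : plane_pt R | onS1 X /\ al * X.1 + be * X.2 + ga = 0].
Definition Ms := [set m : R | m ^+ 2 = Dd].

Lemma line_sol X : onS1 X -> al * X.1 + be * X.2 + ga = 0 -> (al * X.2 - be * X.1) ^+ 2 = Dd.
Proof.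
rewrite /onS1 /sqnorm /Dd /aa => hX hl.
have -> : (al * X.2 - be * X.1) ^+ 2
   = (al ^+ 2 + be ^+ 2) * (X.1 ^+ 2 + X.2 ^+ 2) - (al * X.1 + be * X.2) ^+ 2 by ring.
rewrite hX mulr1 (_ : al * X.1 + be * X.2 = - ga); last lra.
by rewrite sqrrN.
Qed.

Lemma line_pt X : 0 < aa -> onS1 X -> al * X.1 + be * X.2 + ga = 0 ->
  X = ptm (al * X.2 - be * X.1).
Proof.
rewrite /ptm; case: X => x y /= ha _ hl.
have eg : ga = - (al * x + be * y) by lra.
rewrite eg /=; move: ha; rewrite /aa => ha; congr pair; field; lra.
Qed.

Lemma pt_sol m : 0 < aa -> m ^+ 2 = Dd -> Lset (ptm m).
Proof.
rewrite /Lset /ptm /onS1 /sqnorm /= => ha hm; split.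
  have -> : ((- al * ga - be * m) / aa) ^+ 2 + ((- be * ga + al * m) / aa) ^+ 2
       = (ga ^+ 2 + m ^+ 2) / aa.
    by move: ha; rewrite /aa => ha; field; lra.
  by rewrite hm /Dd; field; lra.
by move: ha; rewrite /aa => ha; field; lra.
Qed.

Lemma pt_inv m : 0 < aa -> al * (ptm m).2 - be * (ptm m).1 = m.
Proof. by rewrite /ptm /aa /= => ha; field; lra. Qed.

Lemma Lset_img : 0 < aa \/ Dd < 0 -> Lset = ptm @` Ms.
Proof.
move=> h; apply/seteqP; split.
  move=> X [hX hl]; have hs := line_sol hX hl.
  case: h => [ha|hD]; last by move: hs hD; have := sqr_ge0 (al * X.2 - be * X.1); lra.
  by exists (al * X.2 - be * X.1) => //; rewrite -line_pt.
move=> X [m hm <-].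
case: h => [ha|hD]; last by move: hm hD; rewrite /Ms /=; have := sqr_ge0 m; lra.
exact: pt_sol.
Qed.

Lemma ptm_inj : 0 < aa -> {in Ms &, injective ptm}.
Proof. by move=> ha m1 m2 _ _ e; rewrite -(pt_inv m1 ha) -(pt_inv m2 ha) e. Qed.

Definition nsol : nat := if Dd < 0 then 0%N else if Dd == 0 then 1%N else 2%N.
Definition gsol (k : nat) : R := if k == 0%N then Num.sqrt Dd else - Num.sqrt Dd.

Lemma Ms_img : Ms = gsol @` `I_nsol.
Proof.
rewrite /nsol; case: ltgtP => hD.
- rewrite II0 image_set0; apply/seteqP; split => // m; rewrite /Ms /=.
  by have := sqr_ge0 m; lra.
-
  apply/seteqP; split => m.
    rewrite /Ms /= => hm.
    have : (m - Num.sqrt Dd) * (m + Num.sqrt Dd) = 0.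
      by rewrite -subr_sqr sqr_sqrtr ?hm ?subrr //; lra.
    move/eqP; rewrite mulf_eq0 => /orP [|]; rewrite ?subr_eq0 ?addr_eq0 => /eqP ->.
      by exists 0%N.
    by exists 1%N.
  case=> k hk <-; rewrite /Ms /gsol /=.
  by case: (k == 0%N); rewrite ?sqrrN sqr_sqrtr //; lra.
-
  rewrite II1 image_set1 /gsol /= hD sqrtr0.
  apply/seteqP; split => m; rewrite /Ms /=.
    by rewrite hD => /eqP; rewrite sqrf_eq0 => /eqP.
  by move=> ->; rewrite expr0n.
Qed.

Lemma gsol_inj : {in `I_nsol &, injective gsol}.
Proof.
move=> i j; rewrite /nsol /gsol !inE /=.
case: ltgtP => hD //.
  case: i => [|[|i]] //; case: j => [|[|j]] //= _ _ e; exfalso.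
    have : 0 < Num.sqrt Dd by rewrite sqrtr_gt0.
    lra.
  have : 0 < Num.sqrt Dd by rewrite sqrtr_gt0.
  lra.
by case: i => [|i] //; case: j => [|j].
Qed.

Lemma Ms_card : Ms #= `I_nsol.
Proof. by rewrite Ms_img; exact: inj_card_eq gsol_inj. Qed.

End S4.
Section S5.
Variable R : realType.
Variables (P Q R0 : plane_pt R).
Hypotheses (hP : inD P) (hQ : inD Q) (hR : inD R0).

Definition tri (A : plane_pt R) : set (plane_pt R) := [set A; sig P A; sig Q (sig P A)].
Definition Fix := [set A : plane_pt R | onS1 A /\ Fm P Q R0 A = A].

Lemma tri_mem X A : tri A X <-> (X = A \/ X = sig P A \/ X = sig Q (sig P A)).
Proof. by rewrite /tri /=; split; tauto. Qed.

Lemma fix_facts A : Fix A ->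
  [/\ onS1 (sig P A), onS1 (sig Q (sig P A)), sig P A <> A,
      sig Q (sig P A) <> sig P A & sig Q (sig P A) <> A].
Proof.
case=> hA hF.
have hB := sig_onS1 hP hA; have hC := sig_onS1 hQ hB.
split => //; first exact: sig_neq.
  exact: sig_neq.
move=> e; move: hF; rewrite /Fm e; exact: sig_neq.
Qed.

Lemma circ_eq : circ_inscribed_triangles P Q R0 = tri @` Fix.
Proof.
apply/seteqP; split.
  move=> T [A [B [C [[hA hB hC] [[nAB nBC nCA] [eT [s1 s2 s3]]]]]]].
  have eB := seg_sig hP hA hB s1.
  have eC := seg_sig hQ hB hC s2.
  have eA := seg_sig hR hC hA s3.
  exists A; last by rewrite eT /tri -eB -eC.
  by split => //; rewrite /Fm -eB -eC -eA.
move=> T [A hA <-].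
have [hB hC nBA nCB nCA] := fix_facts hA.
case: hA => hA hF.
exists A, (sig P A), (sig Q (sig P A)); split; first by split.
split.
  split; first by move=> e; apply: nBA.
    by move=> e; apply: nCB.
  exact: nCA.
split => //; split; [exact: sig_seg | exact: sig_seg|].
have := sig_seg hR hC; rewrite -/(Fm P Q R0 A) hF //.
Qed.

Lemma tri_inj : {in Fix &, injective tri}.
Proof.
move=> A A'; rewrite !inE => hA hA' e.
have [hB hC nBA nCB nCA] := fix_facts hA.
have [hB' hC' nBA' nCB' nCA'] := fix_facts hA'.
have hA0 := hA.1; have hA0' := hA'.1.
have mA' : tri A A' by rewrite e; apply/tri_mem; left.
have mB' : tri A (sig P A') by rewrite e; apply/tri_mem; right; left.
have mC' : tri A (sig Q (sig P A')) by rewrite e; apply/tri_mem; right; right.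
case/tri_mem: mA' => [//|[eA'|eA']].
-
  have eB' : sig P A' = A by rewrite eA' sig_invol.
  rewrite eB' in mC' nCB' nCA' hC'.
  case/tri_mem: mC' => [e1|[e1|e1]].
  + by exfalso; apply: nCB'.
  + by exfalso; apply: nCA'; rewrite e1 eA'.
  + exfalso; apply: nBA.
    by rewrite -[sig P A](sig_invol hQ hB) -e1 sig_invol.
-
  case/tri_mem: mB' => [e1|[e1|e1]].
  + exfalso; apply: nCB.
    by rewrite -eA' -e1 sig_invol // eA'.
  + exfalso; apply: nCA.
    by rewrite -eA' -[A'](sig_invol hP hA0') e1 sig_invol.
  + by exfalso; apply: nBA'; rewrite e1 eA'.
Qed.

Lemma circ_card : circ_inscribed_triangles P Q R0 #= Fix.
Proof. by rewrite circ_eq; exact: inj_card_eq tri_inj. Qed.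

End S5.
Section S6.
Variable R : realType.
Implicit Types (X Y : plane_pt R).

Definition cK X Y := (1 - dot X Y) / (Num.sqrt (1 - sqnorm X) * Num.sqrt (1 - sqnorm Y)).

Lemma dot_lt1' X Y : inD X -> inD Y -> 0 < 1 - dot X Y.
Proof.
case: X => x1 y1; case: Y => x2 y2; rewrite /inD /sqnorm /dot /= => h1 h2.
have : 0 <= (x1 - x2) ^+ 2 + (y1 - y2) ^+ 2 by rewrite addr_ge0 // sqr_ge0.
lra.
Qed.

Lemma dK_eq X Y : inD X -> inD Y -> dK X Y = arccosh (cK X Y).
Proof.
rewrite /dK /dP /cK /Ginv.
case: X => x1 x2; case: Y => y1 y2; rewrite /inD /sqnorm /sqdist /dot /= => hX hY.
set s := Num.sqrt (1 - (x1 ^+ 2 + x2 ^+ 2)).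
set t := Num.sqrt (1 - (y1 ^+ 2 + y2 ^+ 2)).
have s0 : 0 < s by rewrite sqrtr_gt0; lra.
have t0 : 0 < t by rewrite sqrtr_gt0; lra.
have hs : x1 ^+ 2 + x2 ^+ 2 = 1 - s ^+ 2 by rewrite sqr_sqrtr; lra.
have ht : y1 ^+ 2 + y2 ^+ 2 = 1 - t ^+ 2 by rewrite sqr_sqrtr; lra.
have E1 : (x1 / (1 + s)) ^+ 2 + (x2 / (1 + s)) ^+ 2 = (x1 ^+ 2 + x2 ^+ 2) / (1 + s) ^+ 2.
  by field; lra.
have E2 : (y1 / (1 + t)) ^+ 2 + (y2 / (1 + t)) ^+ 2 = (y1 ^+ 2 + y2 ^+ 2) / (1 + t) ^+ 2.
  by field; lra.
have E3 : (x1 / (1 + s) - y1 / (1 + t)) ^+ 2 + (x2 / (1 + s) - y2 / (1 + t)) ^+ 2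
   = (x1 ^+ 2 + x2 ^+ 2) / (1 + s) ^+ 2 - 2 * (x1 * y1 + x2 * y2) / ((1 + s) * (1 + t))
     + (y1 ^+ 2 + y2 ^+ 2) / (1 + t) ^+ 2.
  by field; lra.
rewrite E1 E2 E3 hs ht; congr arccosh.
have F1 : 1 - (1 - s ^+ 2) / (1 + s) ^+ 2 = 2 * s / (1 + s) by field; lra.
have F2 : 1 - (1 - t ^+ 2) / (1 + t) ^+ 2 = 2 * t / (1 + t) by field; lra.
rewrite F1 F2; field; lra.
Qed.

Lemma cK_gt0 X Y : inD X -> inD Y -> 0 < cK X Y.
Proof.
move=> hX hY; rewrite /cK; apply: divr_gt0; first exact: dot_lt1'.
by apply: mulr_gt0; rewrite sqrtr_gt0; move: hX hY; rewrite /inD; lra.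
Qed.

Lemma cK_sq X Y : inD X -> inD Y ->
  cK X Y ^+ 2 = (1 - dot X Y) ^+ 2 / ((1 - sqnorm X) * (1 - sqnorm Y)).
Proof.
move=> hX hY; rewrite /cK expr_div_n exprMn !sqr_sqrtr //; move: hX hY; rewrite /inD; lra.
Qed.

Definition phi (z : R) := z + Num.sqrt (z ^+ 2 - 1).

Lemma phi_le a b : 1 <= a -> a <= b -> phi a <= phi b.
Proof.
move=> ha hab; rewrite /phi lerD //; apply: ler_wsqrtr.
have : a ^+ 2 <= b ^+ 2 by nra.
lra.
Qed.

Lemma phi_lt a b : 1 <= a -> a < b -> phi a < phi b.
Proof.
move=> ha hab; rewrite /phi ltr_leD //; apply: ler_wsqrtr.
have : a ^+ 2 <= b ^+ 2 by nra.
lra.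
Qed.

Lemma phi_ge1 a : 1 <= a -> 1 <= phi a.
Proof. by move=> ha; rewrite /phi; have := sqrtr_ge0 (a ^+ 2 - 1); lra. Qed.

Lemma phi_ltE a b : 1 <= a -> 1 <= b -> (phi a < phi b) = (a < b).
Proof.
move=> ha hb; apply/idP/idP; last exact: phi_lt.
by apply: contraLR; rewrite -!leNgt => h; apply: phi_le.
Qed.

Lemma phi_eqE a b : 1 <= a -> 1 <= b -> (phi a == phi b) = (a == b).
Proof.
move=> ha hb; apply/idP/idP; last by move/eqP ->.
move/eqP => E; case: (ltgtP a b) => // h.
  by have := phi_lt ha h; rewrite E ltxx.
by have := phi_lt hb h; rewrite E ltxx.
Qed.

Lemma arccosh_le (a b : R) : 1 <= a -> a <= b -> arccosh a <= arccosh b.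
Proof.
move=> ha hab; rewrite /arccosh ler_ln ?posrE; first exact: phi_le.
- by have := phi_ge1 ha; rewrite /phi; lra.
- have := phi_ge1 (le_trans ha hab); rewrite /phi; lra.
Qed.

End S6.
Section S8.
Variable R : realType.

Lemma sqr_ltE (a b : R) : 0 <= a -> 0 <= b -> (a < b) = (a ^+ 2 < b ^+ 2).
Proof. by move=> ha hb; apply/idP/idP => h; nra. Qed.

Lemma sqr_eqE (a b : R) : 0 <= a -> 0 <= b -> (a == b) = (a ^+ 2 == b ^+ 2).
Proof.
move=> ha hb; apply/idP/idP => [/eqP -> //|/eqP h].
apply/eqP; have : (a - b) * (a + b) = 0 by rewrite -subr_sqr h subrr.
move/eqP; rewrite mulf_eq0 => /orP [/eqP|/eqP]; lra.
Qed.

Lemma ln_eqE (x y : R) : 0 < x -> 0 < y -> (ln x == ln y) = (x == y).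
Proof.
move=> hx hy; rewrite !eq_le !ler_ln // ?posrE //.
Qed.

Lemma cmp_main (c0 cd : R) : 1 <= c0 -> 1 < cd ->
  let Dl := ln ((expR (ln (phi cd)) + 1) / (expR (ln (phi cd)) - 1)) in
  ((ln (phi c0) < Dl) = ((c0 ^+ 2 - 1) * (cd ^+ 2 - 1) < 1)) /\
  ((ln (phi c0) == Dl) = ((c0 ^+ 2 - 1) * (cd ^+ 2 - 1) == 1)).
Proof.
move=> h0 hd Dl.
set hh := Num.sqrt (cd ^+ 2 - 1).
have hh0 : 0 < hh by rewrite sqrtr_gt0; nra.
have hh2 : hh ^+ 2 = cd ^+ 2 - 1 by rewrite sqr_sqrtr; nra.
have hp : phi cd = cd + hh by [].
have pc : 0 < phi cd by rewrite hp; lra.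
have eY : (expR (ln (phi cd)) + 1) / (expR (ln (phi cd)) - 1) = phi (cd / hh).
  rewrite lnK ?posrE // hp /phi.
  have -> : (cd / hh) ^+ 2 - 1 = (hh^-1) ^+ 2 + (cd ^+ 2 - 1 - hh ^+ 2) / hh ^+ 2 by field; lra.
  rewrite hh2 subrr mul0r addr0.
  rewrite sqrtr_sqr ger0_norm; last by rewrite invr_ge0; lra.
  have cross : hh * (cd + hh + 1) = (cd + 1) * (cd + hh - 1) by lra.
  have hne : cd + hh - 1 != 0 by lra.
  have -> : (cd + hh + 1) / (cd + hh - 1) = (hh * (cd + hh + 1)) / (hh * (cd + hh - 1)) by field; lra.
  by rewrite cross; field; lra.
have cD1 : 1 <= cd / hh.
  by rewrite ler_pdivlMr // mul1r; nra.
have P0 : 0 < phi c0 by have := phi_ge1 h0; lra.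
have P1 : 0 < phi (cd / hh) by have := phi_ge1 cD1; lra.
rewrite /Dl eY; split.
  have a1 : 0 <= c0 * hh by apply: mulr_ge0; lra.
  have a2 : 0 <= cd by lra.
  rewrite ltr_ln ?posrE // phi_ltE // ltr_pdivlMr // (sqr_ltE a1 a2).
  rewrite exprMn hh2; apply/idP/idP => h; lra.
rewrite ln_eqE // phi_eqE //.
apply/idP/idP.
  move/eqP => e; apply/eqP.
  have : c0 * hh = cd by rewrite e; field; lra.
  move=> e2; have : (c0 * hh) ^+ 2 = cd ^+ 2 by rewrite e2.
  rewrite exprMn hh2; lra.
move/eqP => e; apply/eqP.
have e2 : (c0 * hh) ^+ 2 = cd ^+ 2 by rewrite exprMn hh2; lra.
have : c0 * hh = cd by apply/eqP; rewrite sqr_eqE ?e2 //; nra.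
move=> e3; rewrite -e3; field; lra.
Qed.

End S8.
Lemma key_id (R : realType) (pp qq pq rp rq rr s1 s2 : R) :
  pp * qq - pq ^+ 2 != 0 ->
  let x1 := (rp * qq - rq * pq) / (pp * qq - pq ^+ 2) in
  let x2 := (rq * pp - rp * pq) / (pp * qq - pq ^+ 2) in
  let Ee := rr - x1 * rp - x2 * rq in
  let ss := s1 ^+ 2 * pp + 2 * s1 * s2 * pq + s2 ^+ 2 * qq in
  (s1 * rp + s2 * rq) ^+ 2 - rr * ss + Ee * ss = (pq ^+ 2 - pp * qq) * (x1 * s2 - x2 * s1) ^+ 2.
Proof. by move=> h x1 x2 Ee ss; rewrite /Ee /ss /x1 /x2; field. Qed.

Lemma key_id2 (R : realType) (pp qq pq rp rq : R) :
  pp * qq - pq ^+ 2 != 0 ->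
  let x1 := (rp * qq - rq * pq) / (pp * qq - pq ^+ 2) in
  let x2 := (rq * pp - rp * pq) / (pp * qq - pq ^+ 2) in
  x1 ^+ 2 * pp + 2 * x1 * x2 * pq + x2 ^+ 2 * qq = x1 * rp + x2 * rq.
Proof. by move=> h x1 x2; rewrite /x1 /x2; field. Qed.

Section S7.
Variable R : realType.
Variables (P Q R0 : plane_pt R).
Hypotheses (hP : inD P) (hQ : inD Q) (hR : inD R0) (hdet : det2 P Q R0 != 0).

Definition pp := sqnorm P - 1.
Definition qq := sqnorm Q - 1.
Definition rr := sqnorm R0 - 1.
Definition pq := dot P Q - 1.
Definition rp := dot R0 P - 1.
Definition rq := dot R0 Q - 1.
Definition Gm := pq ^+ 2 - pp * qq.
Definition den := pp * qq - pq ^+ 2.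
Definition x1 := (rp * qq - rq * pq) / den.
Definition x2 := (rq * pp - rp * pq) / den.
Definition Ee := rr - x1 * rp - x2 * rq.

Lemma pp_lt0 : pp < 0. Proof. by move: hP; rewrite /inD /pp; lra. Qed.
Lemma qq_lt0 : qq < 0. Proof. by move: hQ; rewrite /inD /qq; lra. Qed.
Lemma rr_lt0 : rr < 0. Proof. by move: hR; rewrite /inD /rr; lra. Qed.

Lemma PQ_dist : 0 < sqdist P Q.
Proof.
move: hdet; rewrite /det2 /sqdist.
case: P => a1 a2; case: Q => b1 b2 /= h.
rewrite lt_neqAle addr_ge0 ?sqr_ge0 // andbT; apply/eqP => /esym /sqsum0 [e1 e2].
have f1 : b1 = a1 by lra.
have f2 : b2 = a2 by lra.
by move: h; rewrite f1 f2 !subrr !mul0r subrr eqxx.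
Qed.

Lemma Gm_eq : Gm = sqdist P Q * (1 - sqnorm P) + (dot P Q - sqnorm P) ^+ 2.
Proof.
rewrite /Gm /pq /pp /qq /sqdist /sqnorm /dot.
case: P => a1 a2; case: Q => b1 b2 /=; ring.
Qed.

Lemma Gm_gt0 : 0 < Gm.
Proof.
rewrite Gm_eq; have := PQ_dist; have := sqr_ge0 (dot P Q - sqnorm P).
move: hP; rewrite /inD => h1 h2 h3.
have : 0 < sqdist P Q * (1 - sqnorm P) by apply: mulr_gt0; lra.
lra.
Qed.

Lemma den_nz : den != 0.
Proof. by have := Gm_gt0; rewrite /den /Gm; lra. Qed.

Lemma Ee_eq : Ee * Gm = det2 P Q R0 ^+ 2.
Proof.
have := den_nz; rewrite /Ee /x1 /x2 /Gm /den /pp /qq /rr /pq /rp /rq /det2 /sqnorm /dot.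
case: P => a1 a2; case: Q => b1 b2; case: R0 => c1 c2 /= h.
by field.
Qed.

Lemma Ee_gt0 : 0 < Ee.
Proof.
have h := Ee_eq; have g := Gm_gt0.
have d : 0 < det2 P Q R0 ^+ 2 by rewrite exprn_even_gt0 //.
have -> : Ee = det2 P Q R0 ^+ 2 / Gm by rewrite -h; field; lra.
exact: divr_gt0.
Qed.

Definition Spt (t : R) : plane_pt R := (P.1 + t * (Q.1 - P.1), P.2 + t * (Q.2 - P.2)).

Lemma Spt_L t : dot R0 (Spt t) - 1 = (1 - t) * rp + t * rq.
Proof.
rewrite /Spt /rp /rq /dot; case: P => a1 a2; case: Q => b1 b2; case: R0 => c1 c2 /=; ring.
Qed.

Lemma Spt_ss t : sqnorm (Spt t) - 1 = (1 - t) ^+ 2 * pp + 2 * (1 - t) * t * pq + t ^+ 2 * qq.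
Proof.
rewrite /Spt /pp /qq /pq /sqnorm /dot; case: P => a1 a2; case: Q => b1 b2 /=; ring.
Qed.

Lemma cK_Spt t : inD (Spt t) ->
  cK R0 (Spt t) ^+ 2 = (dot R0 (Spt t) - 1) ^+ 2 / (rr * (sqnorm (Spt t) - 1)).
Proof.
move=> hS; rewrite cK_sq // /rr.
have -> : (1 - dot R0 (Spt t)) ^+ 2 = (dot R0 (Spt t) - 1) ^+ 2 by ring.
congr (_ / _); ring.
Qed.

Lemma cK_lower t : inD (Spt t) -> (rr - Ee) / rr <= cK R0 (Spt t) ^+ 2.
Proof.
move=> hS; rewrite cK_Spt // Spt_L.
have hss : sqnorm (Spt t) - 1 < 0 by move: hS; rewrite /inD; lra.
rewrite Spt_ss in hss *.
set ss := (1 - t) ^+ 2 * pp + 2 * (1 - t) * t * pq + t ^+ 2 * qq in hss *.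
have K := @key_id R pp qq pq rp rq rr (1 - t) t den_nz.
cbv zeta in K; rewrite -/den -/x1 -/x2 -/Ee in K.
rewrite -/ss in K.
have hG : 0 <= (pq ^+ 2 - pp * qq) * (x1 * t - x2 * (1 - t)) ^+ 2.
  by apply: mulr_ge0; [have := Gm_gt0; rewrite /Gm; lra | exact: sqr_ge0].
have hr := rr_lt0.
have hk : 0 < rr * ss by nra.
have -> : (rr - Ee) / rr = ((rr - Ee) * ss) / (rr * ss) by field; lra.
apply: ler_wpM2r; first by rewrite invr_ge0; lra.
lra.
Qed.

Definition tau := x1 + x2.

Lemma ss0_eq : x1 ^+ 2 * pp + 2 * x1 * x2 * pq + x2 ^+ 2 * qq = rr - Ee.
Proof.
have K := @key_id2 R pp qq pq rp rq den_nz; cbv zeta in K.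
by rewrite -/den -/x1 -/x2 in K; rewrite K /Ee; ring.
Qed.

Lemma tau_nz : tau != 0.
Proof.
apply/eqP => ht.
have e2 : x2 = - x1 by move: ht; rewrite /tau; lra.
have := ss0_eq; rewrite e2.
have -> : x1 ^+ 2 * pp + 2 * x1 * - x1 * pq + (- x1) ^+ 2 * qq = x1 ^+ 2 * sqdist P Q.
  rewrite /pp /qq /pq /sqdist /sqnorm /dot; case: P => a1 a2; case: Q => b1 b2 /=; ring.
have := Ee_gt0; have := rr_lt0; have : 0 <= x1 ^+ 2 * sqdist P Q.
  by apply: mulr_ge0; [exact: sqr_ge0 | exact/ltW/PQ_dist].
lra.
Qed.

Definition t0 := x2 / tau.
Definition S0 := Spt t0.

Lemma S0_ss : sqnorm S0 - 1 = (rr - Ee) / tau ^+ 2.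
Proof.
rewrite /S0 Spt_ss -ss0_eq /t0; have := tau_nz; rewrite /tau => h; field => //.
Qed.

Lemma S0_inD : inD S0.
Proof.
rewrite /inD; have := S0_ss; have := Ee_gt0; have := rr_lt0; have := tau_nz => ht h1 h2 e.
have hi : 0 < (tau ^+ 2)^-1 by rewrite invr_gt0 exprn_even_gt0.
have : (rr - Ee) / tau ^+ 2 < 0 by rewrite pmulr_llt0 //; lra.
lra.
Qed.

Lemma cK_S0 : cK R0 S0 ^+ 2 = (rr - Ee) / rr.
Proof.
rewrite /S0 cK_Spt; last exact: S0_inD.
rewrite -/S0 S0_ss /S0 Spt_L.
have K := @key_id R pp qq pq rp rq rr (1 - t0) t0 den_nz.
cbv zeta in K; rewrite -/den -/x1 -/x2 -/Ee in K.
have ht := tau_nz.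
have z : x1 * t0 - x2 * (1 - t0) = 0 by rewrite /t0; move: ht; rewrite /tau => ht; field.
rewrite z expr0n /= mulr0 in K.
have e1 : 1 - t0 = x1 / tau by rewrite /t0; move: ht; rewrite /tau => ht; field.
have hss : (1 - t0) ^+ 2 * pp + 2 * (1 - t0) * t0 * pq + t0 ^+ 2 * qq = (rr - Ee) / tau ^+ 2.
  by rewrite -S0_ss /S0 Spt_ss.
rewrite hss in K.
have hr := rr_lt0; have hE := Ee_gt0.
have hq : (rr - Ee) / tau ^+ 2 != 0.
  by rewrite mulf_neq0 // ?invr_neq0 ?expf_neq0 //; lra.
have -> : ((1 - t0) * rp + t0 * rq) ^+ 2 = (rr - Ee) * ((rr - Ee) / tau ^+ 2) by lra.
by field; apply/andP; split => //; lra.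
Qed.


Lemma c0_ge1 : 1 <= cK R0 S0.
Proof.
have e := cK_S0; have hr := rr_lt0; have hE := Ee_gt0.
have hc : 0 < cK R0 S0 by apply: cK_gt0 => //; exact: S0_inD.
have : 1 <= (rr - Ee) / rr.
  have -> : (rr - Ee) / rr = 1 + Ee * (- rr)^-1 by field; lra.
  have : 0 <= Ee * (- rr)^-1 by apply: mulr_ge0; [lra | rewrite invr_ge0; lra].
  lra.
rewrite -e => h; nra.
Qed.

Lemma deltaK_eq : deltaK P Q R0 = arccosh (cK R0 S0).
Proof.
set E := [set dK R0 S | S in [set S | inD S /\ on_line P Q S]].
have mem : E (arccosh (cK R0 S0)).
  exists S0; last by rewrite dK_eq //; exact: S0_inD.
  split; first exact: S0_inD.
  by exists t0.
have lb : lbound E (arccosh (cK R0 S0)).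
  move=> y [S [hS [t eS]] <-]; subst S.
  have hS' : inD (Spt t) by [].
  rewrite dK_eq //.
  apply: arccosh_le; first exact: c0_ge1.
  have hc : 0 < cK R0 (Spt t) by apply: cK_gt0.
  have hc0 : 0 < cK R0 S0 by apply: cK_gt0 => //; exact: S0_inD.
  have h := @cK_lower t hS'; rewrite -cK_S0 in h.
  change (cK R0 S0 <= cK R0 (Spt t)); nra.
rewrite /deltaK -/E; apply/eqP; rewrite eq_le; apply/andP; split.
  by apply: ge_inf => //; exists (arccosh (cK R0 S0)).
by apply: lb_le_inf => //; exists (arccosh (cK R0 S0)).
Qed.

Lemma cd_sq : cK P Q ^+ 2 - 1 = Gm / (pp * qq).
Proof.
rewrite cK_sq // /Gm /pp /qq /pq.
have := pp_lt0; have := qq_lt0; rewrite /pp /qq => h1 h2.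
by field; apply/andP; split; lra.
Qed.

Lemma cd_gt1 : 1 < cK P Q.
Proof.
have e := cd_sq; have g := Gm_gt0; have := pp_lt0; have := qq_lt0 => h1 h2.
have hc : 0 < cK P Q by exact: cK_gt0.
have : 0 < Gm / (pp * qq) by apply: divr_gt0 => //; nra.
rewrite -e => h; nra.
Qed.

Lemma prod_eq : (cK R0 S0 ^+ 2 - 1) * (cK P Q ^+ 2 - 1) = det2 P Q R0 ^+ 2 / prod3 P Q R0.
Proof.
rewrite cd_sq cK_S0 -Ee_eq /prod3.
have := pp_lt0; have := qq_lt0; have := rr_lt0; have := Gm_gt0.
rewrite /pp /qq /rr => h0 h1 h2 h3.
by field; rewrite ?h0; apply/and3P; split; lra.
Qed.

Lemma prod3_gt0 : 0 < prod3 P Q R0.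
Proof.
rewrite /prod3; have := pp_lt0; have := qq_lt0; have := rr_lt0.
rewrite /pp /qq /rr => h1 h2 h3.
by apply: mulr_gt0; [apply: mulr_gt0|]; lra.
Qed.

Lemma final_cmp :
  let b1 := (deltaK P Q R0 < DeltaK P Q) in
  let b2 := (det2 P Q R0 ^+ 2 < prod3 P Q R0) in
  let b3 := (deltaK P Q R0 == DeltaK P Q) in
  let b4 := (det2 P Q R0 ^+ 2 == prod3 P Q R0) in
  b1 = b2 /\ b3 = b4.
Proof.
move=> b1 b2 b3 b4; rewrite /b1 /b2 /b3 /b4.
have [h1 h2] := cmp_main c0_ge1 cd_gt1.
have hp := prod3_gt0.
rewrite /DeltaK deltaK_eq dK_eq //.
rewrite /arccosh -/(phi (cK R0 S0)) -/(phi (cK P Q)).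
rewrite h1 h2 prod_eq; split.
  by rewrite ltr_pdivrMr // mul1r.
have pn : prod3 P Q R0 != 0 by lra.
apply/idP/idP => /eqP e; apply/eqP.
  by move/(congr1 (fun z => z * prod3 P Q R0)): e; rewrite divfK // mul1r.
by rewrite e divff.
Qed.

End S7.
Lemma det2_nz (R : realType) (P Q R0 : plane_pt R) : ~ collinear P Q R0 -> det2 P Q R0 != 0.
Proof.
move=> nc; apply/negP => /eqP h; apply: nc.
have col : forall a b : R, (a != 0 \/ b != 0) ->
    a * (Q.1 - P.1) + b * (Q.2 - P.2) = 0 -> a * (R0.1 - P.1) + b * (R0.2 - P.2) = 0 ->
    collinear P Q R0.
  move=> a b ab e1 e2; exists a, b, (a * P.1 + b * P.2); split => //.
  split; first by [].
  split; lra.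
move: h; rewrite /det2 => h.
have [e1|n1] := eqVneq (Q.2 - P.2) 0; last first.
  apply: (col (Q.2 - P.2) (- (Q.1 - P.1))); [by left|ring|lra].
have [e2|n2] := eqVneq (Q.1 - P.1) 0; last first.
  apply: (col (Q.2 - P.2) (- (Q.1 - P.1))); [by right; rewrite oppr_eq0|ring|lra].
have [e3|n3] := eqVneq (R0.2 - P.2) 0.
  have [e4|n4] := eqVneq (R0.1 - P.1) 0.
    by apply: (col 1 0); [left; rewrite oner_eq0 | rewrite e2; ring | rewrite e4; ring].
  by apply: (col (R0.2 - P.2) (- (R0.1 - P.1))); [right; rewrite oppr_eq0 | rewrite e1 e2; ring | ring].
by apply: (col (R0.2 - P.2) (- (R0.1 - P.1))); [left | rewrite e1 e2; ring | ring].
Qed.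

Theorem theorem3p1 (R : realType) (P Q R0 : plane_pt R) :
  inD P -> inD Q -> inD R0 -> ~ collinear P Q R0 ->
  (card_eq (circ_inscribed_triangles P Q R0)
     `I_(if (deltaK P Q R0 < DeltaK P Q)%R then 0%N
         else if (deltaK P Q R0 == DeltaK P Q)%R then 1%N else 2%N)).
Proof.
move=> hP hQ hR hnc.
have hdet := det2_nz hnc.
have := final_cmp hP hQ hR hdet; cbv zeta => -[c1 c2].
rewrite c1 c2.
set al := alpha P Q R0; set be := beta P Q R0; set ga := gamma P Q R0.
have hD : Dd al be ga = 4 * (det2 P Q R0 ^+ 2 - prod3 P Q R0).
  by rewrite /Dd /aa; exact: disc_eq.
have eFix : Fix P Q R0 = Lset al be ga.
  apply/seteqP; split => X [hX e]; split => //.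
    by move/(fix_iff hP hQ hR hX): e.
  by apply/(fix_iff hP hQ hR hX).
have haa : 0 < aa al be \/ Dd al be ga < 0.
  have [hneg|hnn] := ltP (Dd al be ga) 0; first by right.
  left; rewrite lt_neqAle /aa addr_ge0 ?sqr_ge0 // andbT.
  apply/eqP => /esym /sqsum0 [a0 b0].
  have g0 : ga = 0.
    move: hnn; rewrite /Dd /aa a0 b0 => hnn.
    have : ga ^+ 2 = 0 by have := sqr_ge0 ga; lra.
    by move/eqP; rewrite sqrf_eq0 => /eqP.
  by apply: (not_all0 hP hQ hR); split; [|split].
have eL := Lset_img haa.
have FM : Fix P Q R0 #= Ms al be ga.
  rewrite eFix eL; apply: inj_card_eq.
  case: haa => [ha|hneg]; first exact: ptm_inj.
  move=> m1 m2; rewrite !inE /Ms /= => h1.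
  by exfalso; have := sqr_ge0 m1; lra.
have MI := Ms_card al be ga.
have en : nsol al be ga =
   (if det2 P Q R0 ^+ 2 < prod3 P Q R0 then 0%N
    else if det2 P Q R0 ^+ 2 == prod3 P Q R0 then 1%N else 2%N).
  rewrite /nsol hD pmulr_rlt0 // subr_lt0 mulf_eq0 subr_eq0.
  by rewrite (_ : (4 : R) == 0 = false) //; apply/negbTE; rewrite pnatr_eq0.
rewrite -en.
apply: card_eq_trans (circ_card hP hQ hR) _.
exact: card_eq_trans FM MI.
Qed.
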